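(* Let $m\geq 1$ be an integer and let $h:{}^m\mathbb{A}\to{}^m\mathbb{A}$ be a homeomorphism. Then there is a pairwise disjoint sequence of basic clopen boxes $U_n=\prod_{j\in m} I^j_n$ ($n\in\omega$), each $I^j_n$ a clopen interval of $\mathbb{A}$, such that $\bigcup_n U_n$ is dense in ${}^m\mathbb{A}$ and for each $n$ we have $h\restriction U_n=\sigma\circ(h^0\times\cdots\times h^{m-1})$, where each $h^j:I^j_n\to\mathbb{A}$ is a strictly monotone homeomorphism onto a clopen interval of $\mathbb{A}$, and $\sigma:{}^m\mathbb{A}\to{}^m\mathbb{A}$ is a permutation of the coordinates (i.e. there is a bijection $\tau$ of $m=\{0,\dots,m-1\}$ with $\sigma(y)(\tau(j))=y(j)$ for all $y$ and $j$).
   Context: Let $\mathbb{A}_0=\,]0,1]\times\{0\}$, $\mathbb{A}_1=[0,1[\,\times\{1\}$ and $\mathbb{A}=\mathbb{A}_0\cup\mathbb{A}_1$, ordered lexicographically: $\langle a,r\rangle\prec\langle b,s\rangle$ iff $a<b$, or $a=b$ and $r<s$; $\mathbb{A}$ (the double arrow space) carries the order topology. ${}^m\mathbb{A}$ is the $m$-th power with the product topology, elements viewed as functions $m=\{0,\dots,m-1\}\to\mathbb{A}$. A clopen interval is a nonempty convex subset of $\mathbb{A}$ that is clopen. A partial function $f:\mathbb{A}\to\mathbb{A}$ is strictly monotone if it is strictly increasing or strictly decreasing. $h^0\times\cdots\times h^{m-1}$ is the product map $x\mapsto (h^0(x(0)),\dots,h^{m-1}(x(m-1)))$. *)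

(* Defs.v *)
From mathcomp Require Import all_boot all_order all_algebra.
From mathcomp Require Import reals.
Set Implicit Arguments. Unset Strict Implicit. Unset Printing Implicit Defensive.
Import Order.TTheory GRing.Theory Num.Theory.
Local Open Scope ring_scope.

(* A = ]0,1] x {0}  U  [0,1[ x {1};  the bool is the second coordinate
   (false = 0, true = 1). *)
Definition dA (R : realType) :=
  {p : R * bool | if p.2 then (0 <= p.1) && (p.1 < 1) else (0 < p.1) && (p.1 <= 1)}.

Definition ltA (R : realType) (x y : dA R) : Prop :=
  (sval x).1 < (sval y).1 \/
  ((sval x).1 = (sval y).1 /\ (sval x).2 = false /\ (sval y).2 = true).

(* order topology: every point of U has a basic neighbourhood
   (open interval / open ray / whole space) inside U *)
Definition openA (R : realType) (U : dA R -> Prop) : Prop :=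
  forall x, U x -> exists (lo hi : option (dA R)),
    (forall a, lo = Some a -> ltA a x) /\ (forall b, hi = Some b -> ltA x b) /\
    (forall y, (forall a, lo = Some a -> ltA a y) ->
               (forall b, hi = Some b -> ltA y b) -> U y).

Definition clopenA (R : realType) (U : dA R -> Prop) : Prop :=
  openA U /\ openA (fun x => ~ U x).

Definition convexA (R : realType) (U : dA R -> Prop) : Prop :=
  forall x y z, U x -> U z -> ltA x y -> ltA y z -> U y.

Definition clopen_intervalA (R : realType) (U : dA R -> Prop) : Prop :=
  (exists x, U x) /\ convexA U /\ clopenA U.

Definition openP (R : realType) (m : nat) (U : ('I_m -> dA R) -> Prop) : Prop :=
  forall x, U x -> exists V : 'I_m -> dA R -> Prop,
    (forall j, openA (V j) /\ V j (x j)) /\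
    (forall y, (forall j, V j (y j)) -> U y).

Definition continuousP (R : realType) (m : nat) (f : ('I_m -> dA R) -> ('I_m -> dA R)) :=
  forall V, openP V -> openP (fun x => V (f x)).

Definition homeomorphismP (R : realType) (m : nat) (h : ('I_m -> dA R) -> ('I_m -> dA R)) :=
  exists g, (forall x, g (h x) = x) /\ (forall y, h (g y) = y) /\
            continuousP h /\ continuousP g.

Definition continuous_onA (R : realType) (I : dA R -> Prop) (f : dA R -> dA R) :=
  forall V, openA V -> exists W, openA W /\ forall x, I x -> (V (f x) <-> W x).

Definition homeo_ontoA (R : realType) (I J : dA R -> Prop) (f : dA R -> dA R) :=
  exists g : dA R -> dA R,
    (forall x, I x -> J (f x) /\ g (f x) = x) /\
    (forall y, J y -> I (g y) /\ f (g y) = y) /\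
    continuous_onA I f /\ continuous_onA J g.

Definition strictly_monotone_onA (R : realType) (I : dA R -> Prop) (f : dA R -> dA R) :=
  (forall x y, I x -> I y -> ltA x y -> ltA (f x) (f y)) \/
  (forall x y, I x -> I y -> ltA x y -> ltA (f y) (f x)).

(* Main.v *)
Require Import Defs.
From mathcomp Require Import all_boot all_order all_algebra.
From mathcomp Require Import reals.
From mathcomp Require Import boolp classical_sets.
From mathcomp Require Import lra.
Set Implicit Arguments. Unset Strict Implicit. Unset Printing Implicit Defensive.
Import Order.TTheory GRing.Theory Num.Theory.
Local Open Scope ring_scope.

Section Basics.
Variable R : realType.
Local Notation A := (dA R).
Implicit Types x y z : A.

Definition rr (x : A) : R := (sval x).1.
Definition ty (x : A) : bool := (sval x).2.

Lemma rP (x : A) : (ty x -> 0 <= rr x /\ rr x < 1) /\ (~~ ty x -> 0 < rr x /\ rr x <= 1).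
Proof.
rewrite /rr /ty; case: x => [[a b]] /=; case: b => /andP[H1 H2]; split=> //.
Qed.

Lemma r01 (x : A) : 0 <= rr x /\ rr x <= 1.
Proof. have [H1 H2] := rP x; case E: (ty x).
- have [] := H1 E; move=> *; split=> //; lra.
- have [] := H2 (negbT E); move=> *; split=> //; lra.
Qed.

Lemma ty1 (x : A) : ty x -> rr x < 1.
Proof. by move=> H; have [H1 _] := rP x; case: (H1 H). Qed.
Lemma ty0 (x : A) : ~~ ty x -> 0 < rr x.
Proof. by move=> H; have [_ H1] := rP x; case: (H1 H). Qed.

Lemma eqA (x y : A) : rr x = rr y -> ty x = ty y -> x = y.
Proof.
case: x y => [[a b] Ha] [[c d] Hc]; rewrite /rr /ty /= => E1 E2.
move: Ha Hc; rewrite E1 E2 => Ha Hc; congr exist; exact: bool_irrelevance.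
Qed.

Definition pt0 : A := exist _ (1, false) (andb_true_intro (conj (@ltr01 R) (lexx 1))).

Definition mkA (a : R) (b : bool) : A := insubd pt0 (a, b).

Lemma mkAE a b : (if b then (0 <= a) && (a < 1) else (0 < a) && (a <= 1)) ->
  rr (mkA a b) = a /\ ty (mkA a b) = b.
Proof. by move=> H; rewrite /rr /ty /mkA insubdK. Qed.

Lemma mkA1 a : 0 <= a -> a < 1 -> rr (mkA a true) = a /\ ty (mkA a true) = true.
Proof. by move=> H1 H2; apply: mkAE; rewrite H1 H2. Qed.
Lemma mkA0 a : 0 < a -> a <= 1 -> rr (mkA a false) = a /\ ty (mkA a false) = false.
Proof. by move=> H1 H2; apply: mkAE; rewrite H1 H2. Qed.

Lemma ltAE x y : ltA x y <-> (rr x < rr y \/ (rr x = rr y /\ ty x = false /\ ty y = true)).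
Proof. by []. Qed.

Definition leA (x y : A) := ltA x y \/ x = y.

Lemma leAE x y : leA x y <-> (rr x < rr y \/ (rr x = rr y /\ (ty x -> ty y))).
Proof.
rewrite /leA ltAE; split.
- case=> [[H|[H1 [H2 H3]]]|->]; [by left| right; split=> //; rewrite H3 | by right].
- case=> [H|[H1 H2]]; first by left; left.
  case E1: (ty x) H2 => H2.
  + by right; apply: eqA => //; rewrite H2.
  + case E2: (ty y); first by left; right.
    by right; apply: eqA => //; rewrite E2.
Qed.

Lemma ltA_irr x : ~ ltA x x.
Proof. rewrite ltAE => -[H|[_ [H1 H2]]]; [lra| by rewrite H1 in H2]. Qed.

Lemma ltA_trans x y z : ltA x y -> ltA y z -> ltA x z.
Proof.
rewrite !ltAE => -[H1|[H1 [H2 H3]]] [H4|[H4 [H5 H6]]].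
- left; lra.
- left; lra.
- left; lra.
- by rewrite H5 in H3.
Qed.

Lemma ltA_total x y : ltA x y \/ x = y \/ ltA y x.
Proof.
rewrite !ltAE.
have [H|H|H] := ltgtP (rr x) (rr y).
- by left; left.
- by right; right; left.
- case E1: (ty x); case E2: (ty y).
  + by right; left; apply: eqA => //; rewrite E1 E2.
  + by right; right; right.
  + by left; right.
  + by right; left; apply: eqA => //; rewrite E1 E2.
Qed.

Lemma leA_refl x : leA x x. Proof. by right. Qed.
Lemma leA_trans x y z : leA x y -> leA y z -> leA x z.
Proof.
case=> [H1|->] // [H2|<-]; last by left.
by left; apply: ltA_trans H1 H2.
Qed.
Lemma leA_ltA_trans x y z : leA x y -> ltA y z -> ltA x z.
Proof. by case=> [H|->] // H2; apply: ltA_trans H H2. Qed.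
Lemma ltA_leA_trans x y z : ltA x y -> leA y z -> ltA x z.
Proof. by move=> H [H2|<-] //; apply: ltA_trans H H2. Qed.
Lemma leA_antisym x y : leA x y -> leA y x -> x = y.
Proof.
case=> [H1|->] // [H2|->] //; case: (ltA_irr (ltA_trans H1 H2)).
Qed.
Lemma leA_total x y : leA x y \/ leA y x.
Proof.
have [H|[H|H]] := ltA_total x y; [left; left | left; right | right; left] => //.
Qed.
Lemma not_leA x y : ~ leA x y -> ltA y x.
Proof.
move=> H; have [H1|[H1|H1]] := ltA_total x y => //.
- by case: H; left.
- by case: H; right.
Qed.
Lemma not_ltA x y : ~ ltA x y -> leA y x.
Proof.
move=> H; have [H1|[H1|H1]] := ltA_total x y => //.
- by right.
- by left.
Qed.
Lemma ltA_leA x y : ltA x y -> leA x y. Proof. by left. Qed.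
Lemma ltA_not_leA x y : ltA x y -> ~ leA y x.
Proof. move=> H1 H2; apply: (ltA_irr (ltA_leA_trans H1 H2)). Qed.

Definition side (x : A) (e : R) (z : A) : Prop :=
  if ty x then leA x z /\ rr z < rr x + e else leA z x /\ rr x - e < rr z.

Lemma side_mono x e e' z : e <= e' -> side x e z -> side x e' z.
Proof. rewrite /side; case: (ty x) => H [H1 H2]; split=> //; lra. Qed.

Lemma side_self x e : 0 < e -> side x e x.
Proof. rewrite /side => H; case: (ty x); split; try apply: leA_refl; lra. Qed.

Lemma openA_one (U : A -> Prop) x : openA U -> U x ->
  exists e, 0 < e /\ forall z, side x e z -> U z.
Proof.
move=> HU Ux; have [lo [hi [Hlo [Hhi HV]]]] := HU x Ux.
rewrite /side; case Ex: (ty x).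
- exists (if hi is Some b then rr b - rr x else 1); split.
  + case: hi Hhi {HV} => [b|] Hb; last lra.
    have := Hb b erefl; rewrite ltAE Ex => -[H|[_ [H _]]] //; lra.
  + move=> z [Hxz Hz]; apply: HV.
    * by move=> a /Hlo Ha; apply: ltA_leA_trans Ha Hxz.
    * move=> b Eb; rewrite Eb in Hz; rewrite ltAE; left; lra.
- exists (if lo is Some b then rr x - rr b else 1); split.
  + case: lo Hlo {HV} => [b|] Hb; last lra.
    have := Hb b erefl; rewrite ltAE Ex => -[H|[_ [_ H]]] //; lra.
  + move=> z [Hxz Hz]; apply: HV.
    * move=> b Eb; rewrite Eb in Hz; rewrite ltAE; left; lra.
    * by move=> a /Hhi Ha; apply: leA_ltA_trans Hxz Ha.
Qed.

Lemma side_between x e : 0 < e -> exists lo hi,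
  (forall a, lo = Some a -> ltA a x) /\ (forall b, hi = Some b -> ltA x b) /\
  (forall y, (forall a, lo = Some a -> ltA a y) -> (forall b, hi = Some b -> ltA y b) -> side x e y).
Proof.
move=> He; rewrite /side; have [Hr0 Hr1] := r01 x; case Ex: (ty x).
- have Hx1 := ty1 Ex.
  exists (if 0 < rr x then Some (mkA (rr x) false) else None).
  exists (if rr x + e <= 1 then Some (mkA (rr x + e) false) else None).
  split; [|split].
  + case: ifP => // H a [<-]; have [E1 E2] := mkA0 H Hr1.
    by rewrite ltAE E1 E2 Ex; right.
  + case: ifP => // H b [<-]; have [|E1 E2] := mkA0 _ H; first lra.
    by rewrite ltAE E1 E2; left; lra.
  + move=> y Hlo Hhi; split.
    * rewrite leAE Ex; move: Hlo; case: ifP => H Hlo.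
      -- have := Hlo _ erefl; have [E1 E2] := mkA0 H Hr1; rewrite ltAE E1 E2.
         case=> [?|[? [_ ?]]]; [by left| by right].
      -- have [Hy0 _] := r01 y; case Ey: (ty y).
         ++ have ? : rr x = 0 by lra.
            case: (ltrP (rr x) (rr y)) => ?; [by left|right; split=> //; lra].
         ++ have := ty0 (negbT Ey); move=> ?; left; lra.
    * move: Hhi; case: ifP => H Hhi.
      -- have := Hhi _ erefl; have [|E1 E2] := mkA0 _ H; first lra.
         rewrite ltAE E1 E2 => -[?|[? [? ?]]]; lra.
      -- have [_ ?] := r01 y; lra.
- have Hx0 := ty0 (negbT Ex).
  exists (if 0 <= rr x - e then Some (mkA (rr x - e) true) else None).
  exists (if rr x < 1 then Some (mkA (rr x) true) else None).
  split; [|split].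
  + case: ifP => // H a [<-]; have [|E1 E2] := mkA1 H; first lra.
    by rewrite ltAE E1 E2; left; lra.
  + case: ifP => // H b [<-]; have [E1 E2] := mkA1 Hr0 H.
    by rewrite ltAE E1 E2 Ex; right.
  + move=> y Hlo Hhi; split.
    * rewrite leAE Ex; move: Hhi; case: ifP => H Hhi.
      -- have := Hhi _ erefl; have [E1 E2] := mkA1 Hr0 H; rewrite ltAE E1 E2.
         case=> [?|[? [Hy _]]]; [by left| right; split=> //; by rewrite Hy].
      -- have [_ Hy1] := r01 y; case Ey: (ty y).
         ++ have := ty1 Ey; move=> ?; left; lra.
         ++ have ? : rr x = 1 by lra.
            case: (ltrP (rr y) (rr x)) => ?; [by left|right; split=> //; lra].
    * move: Hlo; case: ifP => H Hlo.
      -- have := Hlo _ erefl; have [|E1 E2] := mkA1 H; first lra.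
         rewrite ltAE E1 E2 => -[?|[? [? ?]]]; lra.
      -- have [? _] := r01 y; lra.
Qed.

Lemma openA_side (U : A -> Prop) :
  (forall x, U x -> exists e, 0 < e /\ forall z, side x e z -> U z) -> openA U.
Proof.
move=> H x Ux; have [e [He Hz]] := H x Ux.
have [lo [hi [H1 [H2 H3]]]] := side_between x He.
exists lo, hi; split=> // ; split=> // y Hl Hh; apply: Hz; exact: H3.
Qed.

Lemma openA_or (U V : A -> Prop) : openA U -> openA V -> openA (fun x => U x \/ V x).
Proof.
move=> HU HV x [Ux|Vx].
- have [lo [hi [H1 [H2 H3]]]] := HU x Ux; exists lo, hi; do 2 split => //.
  by move=> y Hl Hh; left; apply: H3.
- have [lo [hi [H1 [H2 H3]]]] := HV x Vx; exists lo, hi; do 2 split => //.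
  by move=> y Hl Hh; right; apply: H3.
Qed.

Lemma openA_and (U V : A -> Prop) : openA U -> openA V -> openA (fun x => U x /\ V x).
Proof.
move=> HU HV; apply: openA_side => x [Ux Vx].
have [e1 [He1 H1]] := openA_one HU Ux.
have [e2 [He2 H2]] := openA_one HV Vx.
exists (Num.min e1 e2); split; first by rewrite lt_min He1 He2.
move=> z Hz; split.
- apply: H1; apply: side_mono Hz; by rewrite ge_min lexx.
- apply: H2; apply: side_mono Hz; by rewrite ge_min lexx orbT.
Qed.

Lemma openA_T : openA (fun _ : A => True).
Proof. by move=> x _; exists None, None. Qed.

End Basics.

Section Intervals.
Variable R : realType.
Local Notation A := (dA R).
Implicit Types x y z : A.

Definition tr x : R := if ty x then 1 else 0.

Lemma trP x : (tr x = 0 \/ tr x = 1) /\ 0 <= rr x /\ rr x <= 1 /\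
  (tr x = 1 -> rr x < 1) /\ (tr x = 0 -> 0 < rr x).
Proof.
rewrite /tr; have [H1 H2] := r01 x; case E: (ty x).
- have := ty1 E; move=> ?; do !split => //; try lra; by right.
- have := ty0 (negbT E); move=> ?; do !split => //; try lra; by left.
Qed.

Lemma ltAR x y : ltA x y <-> (rr x < rr y \/ (rr x = rr y /\ tr x < tr y)).
Proof.
rewrite ltAE /tr; case: (ty x); case: (ty y); split; try lra; move=> [H|[H [H1 H2]]]; try lra; by [].
Qed.

Lemma leAR x y : leA x y <-> (rr x < rr y \/ (rr x = rr y /\ tr x <= tr y)).
Proof.
rewrite leAE /tr; case: (ty x); case: (ty y); split; case=> [H|[H H1]];
  first [by left | (right; split; [done| lra]) | (right; split; [done| done]) | (by have := H1 isT) | lra ].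
Qed.

Lemma eqAR x y : rr x = rr y -> tr x = tr y -> x = y.
Proof.
move=> H1 H2; apply: eqA => //; move: H2; rewrite /tr; case: (ty x); case: (ty y) => //; lra.
Qed.

Lemma mkAR1 a : 0 <= a -> a < 1 -> rr (mkA a true) = a /\ tr (mkA a true) = 1.
Proof. by move=> H1 H2; have [E1 E2] := mkA1 H1 H2; rewrite /tr E1 E2. Qed.
Lemma mkAR0 a : 0 < a -> a <= 1 -> rr (mkA a false) = a /\ tr (mkA a false) = 0.
Proof. by move=> H1 H2; have [E1 E2] := mkA0 H1 H2; rewrite /tr E1 E2. Qed.

Lemma sideR x e z : side x e z <->
  ((tr x = 1 /\ leA x z /\ rr z < rr x + e) \/ (tr x = 0 /\ leA z x /\ rr x - e < rr z)).
Proof.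
rewrite /side /tr; case: (ty x); split.
- by move=> ?; left.
- case=> [[_ H]|[H _]] //; lra.
- by move=> ?; right.
- case=> [[H _]|[_ H]] //; lra.
Qed.

Definition inI (p q : R) x : Prop :=
  (p < rr x \/ (p = rr x /\ tr x = 1)) /\ (rr x < q \/ (rr x = q /\ tr x = 0)).

Lemma inI_open p q : openA (inI p q).
Proof.
apply: openA_side => x; have := trP x; rewrite /inI /tr; case E: (ty x) => HP Hx.
- exists (q - rr x); split; first lra.
  move=> z; rewrite sideR !leAR /tr E; have := trP z; rewrite /tr; lra.
- exists (rr x - p); split; first lra.
  move=> z; rewrite sideR !leAR /tr E; have := trP z; rewrite /tr; lra.
Qed.

Lemma inI_copen p q : openA (fun x => ~ inI p q x).
Proof.
apply: openA_side => x; have := trP x; rewrite /inI /tr; case E: (ty x) => HP Hx.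
- case: (ltrP (rr x) p) => Hxp.
  + exists (p - rr x); split; first lra.
    move=> z; rewrite sideR !leAR /tr E; have := trP z; rewrite /tr; lra.
  + exists 1; split; first lra.
    move=> z; rewrite sideR !leAR /tr E; have := trP z; rewrite /tr; lra.
- case: (ltrP q (rr x)) => Hxp.
  + exists (rr x - q); split; first lra.
    move=> z; rewrite sideR !leAR /tr E; have := trP z; rewrite /tr; lra.
  + exists 1; split; first lra.
    move=> z; rewrite sideR !leAR /tr E; have := trP z; rewrite /tr; lra.
Qed.

Lemma inI_conv p q : convexA (inI p q).
Proof.
move=> x y z [Hx1 _] [_ Hz2]; rewrite !ltAR => Hxy Hyz; split.
- move: Hx1 Hxy; have := trP x; have := trP y; lra.
- move: Hz2 Hyz; have := trP z; have := trP y; lra.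
Qed.

Lemma inI_mid p q : 0 <= p -> p < q -> q <= 1 -> inI p q (mkA ((p + q) / 2) true).
Proof.
move=> H1 H2 H3; have [E1 E2] := @mkAR1 ((p + q) / 2) ltac:(lra) ltac:(lra).
rewrite /inI E1 E2; lra.
Qed.

Lemma inI_clopen p q : 0 <= p -> p < q -> q <= 1 -> clopen_intervalA (inI p q).
Proof.
move=> H1 H2 H3; split; first by exists (mkA ((p + q) / 2) true); apply: inI_mid.
split; first exact: inI_conv.
split; [exact: inI_open | exact: inI_copen].
Qed.

Lemma inI_sub p q p' q' x : p <= p' -> q' <= q -> inI p' q' x -> inI p q x.
Proof. rewrite /inI; lra. Qed.

Lemma inI_r p q x : inI p q x -> p <= rr x /\ rr x <= q.
Proof. rewrite /inI; lra. Qed.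

Lemma inI_strict p q x : p < rr x -> rr x < q -> inI p q x.
Proof. rewrite /inI; lra. Qed.

Lemma openA_not_empty (V : A -> Prop) a : openA V -> V a -> exists z, V z /\ z <> a.
Proof.
move=> HV Va; have [e [He H]] := openA_one HV Va.
have [[Ha|Ha] [H0 [H1 [Ht1 Ht0]]]] := trP a.
- have Hp := Ht0 Ha.
  set b := Num.max (rr a - e / 2) (rr a / 2).
  have Hb1 : rr a - e / 2 <= b by rewrite le_max lexx.
  have Hb2 : rr a / 2 <= b by rewrite le_max lexx orbT.
  have Hb3 : b < rr a by rewrite gt_max; apply/andP; split; lra.
  clearbody b.
  have [E1 E2] := @mkAR0 b ltac:(lra) ltac:(lra).
  exists (mkA b false); split.
  + apply: H; rewrite sideR; right; split=> //; rewrite leAR E1 E2; lra.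
  + move=> E; move: E1; rewrite E; lra.
- have Hp := Ht1 Ha.
  set b := Num.min (rr a + e / 2) ((rr a + 1) / 2).
  have Hb1 : b <= rr a + e / 2 by rewrite ge_min lexx.
  have Hb2 : b <= (rr a + 1) / 2 by rewrite ge_min lexx orbT.
  have Hb3 : rr a < b by rewrite lt_min; apply/andP; split; lra.
  clearbody b.
  have [E1 E2] := @mkAR1 b ltac:(lra) ltac:(lra).
  exists (mkA b true); split.
  + apply: H; rewrite sideR; left; split=> //; rewrite leAR E1 E2; lra.
  + move=> E; move: E1; rewrite E; lra.
Qed.

End Intervals.

Section Product.
Variable R : realType.
Variable m : nat.
Local Notation A := (dA R).
Local Notation Pt := ('I_m -> dA R).
Implicit Types x y z : Pt.
Implicit Types p q : 'I_m -> R.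

Definition inB p q x := forall j, inI (p j) (q j) (x j).
Definition validB p q := forall j, 0 <= p j /\ p j < q j /\ q j <= 1.
Definition subB p' q' p q := forall j, p j <= p' j /\ q' j <= q j.
Definition denseB (S : Pt -> Prop) p q := forall p' q', validB p' q' -> subB p' q' p q ->
  exists x, inB p' q' x /\ S x.

Lemma subB_refl p q : subB p q p q.
Proof. by move=> j; split. Qed.
Lemma subB_trans p1 q1 p2 q2 p3 q3 : subB p1 q1 p2 q2 -> subB p2 q2 p3 q3 -> subB p1 q1 p3 q3.
Proof. move=> H1 H2 j; have := H1 j; have := H2 j; lra. Qed.
Lemma inB_sub p' q' p q x : subB p' q' p q -> inB p' q' x -> inB p q x.
Proof. move=> H Hx j; have [? ?] := H j; exact: inI_sub (Hx j). Qed.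
Lemma denseB_sub S p q p' q' : denseB S p q -> subB p' q' p q -> denseB S p' q'.
Proof. move=> HD Hs p1 q1 Hv Hs1; apply: HD Hv _; exact: subB_trans Hs1 Hs. Qed.

Definition midB p q : Pt := fun j => mkA ((p j + q j) / 2) true.
Lemma midB_in p q : validB p q -> inB p q (midB p q).
Proof. move=> Hv j; have [? [? ?]] := Hv j; exact: inI_mid. Qed.

Definition upd x (j : 'I_m) (a : A) : Pt := fun k => if k == j then a else x k.
Lemma upd_eq x j a : upd x j a j = a. Proof. by rewrite /upd eqxx. Qed.
Lemma upd_neq x j a k : k != j -> upd x j a k = x k. Proof. by rewrite /upd => /negbTE ->. Qed.
Lemma upd_same x j : upd x j (x j) = x.
Proof. by apply/funext => k; rewrite /upd; case: eqP => // ->. Qed.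

Lemma openP_prod (V : 'I_m -> A -> Prop) : (forall j, openA (V j)) ->
  openP (fun x => forall j, V j (x j)).
Proof. by move=> HV x Hx; exists V; split. Qed.

Lemma openP_inB p q : openP (inB p q).
Proof. apply: (@openP_prod (fun j => inI (p j) (q j))) => j; exact: inI_open. Qed.

Lemma openP_and (U V : Pt -> Prop) : openP U -> openP V -> openP (fun x => U x /\ V x).
Proof.
move=> HU HV x [Ux Vx]; have [W1 [H1 H1']] := HU x Ux; have [W2 [H2 H2']] := HV x Vx.
exists (fun j a => W1 j a /\ W2 j a); split.
- move=> j; have [? ?] := H1 j; have [? ?] := H2 j; split; last by split.
  exact: openA_and.
- move=> y Hy; split; [apply: H1' | apply: H2'] => j; by case: (Hy j).
Qed.

Lemma openP_proj (V : A -> Prop) (i : 'I_m) : openA V -> openP (fun y => V (y i)).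
Proof.
move=> HV x Hx; exists (fun j => if j == i then V else fun _ => True); split.
- move=> j; case: eqP => [->|_]; [by split | split=> //; exact: openA_T].
- by move=> y Hy; have := Hy i; rewrite eqxx.
Qed.

Lemma openP_upd (U : Pt -> Prop) x j : openP U -> openA (fun a => U (upd x j a)).
Proof.
move=> HU; apply: openA_side => a Ha; have [V [HV HV']] := HU _ Ha.
have [HVj Va] := HV j; rewrite upd_eq in Va.
have [e [He He']] := openA_one HVj Va; exists e; split=> // z Hz; apply: HV' => k.
case: (eqVneq k j) => [->|Hk]; first by rewrite upd_eq; apply: He'.
rewrite upd_neq //; have [_ ] := HV k; by rewrite upd_neq.
Qed.

Definition contA (f : Pt -> A) := forall V, openA V -> openP (fun x => V (f x)).

Definition nb (e : R) x z := forall k, side (x k) e (z k).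

Lemma archi_inv (e : R) : 0 < e -> exists n : nat, n.+1%:R^-1 < e.
Proof.
move=> He; have He' : 0 <= e^-1 by rewrite invr_ge0 ltW.
have := @archi_boundP _ (e^-1) He'.
set N := Num.Def.archi_bound _ => HN.
exists N; rewrite invf_plt ?posrE //; apply: lt_le_trans HN _; rewrite ler_nat; exact: leqnSn.
Qed.

Lemma inv_anti (a b : nat) : (a <= b)%N -> b.+1%:R^-1 <= a.+1%:R^-1 :> R.
Proof. move=> H; rewrite lef_pV2 ?posrE ?ltr0n // ler_nat; exact: H. Qed.

Lemma finite_max (P : 'I_m -> nat -> Prop) :
  (forall k a b, (a <= b)%N -> P k a -> P k b) -> (forall k, exists n, P k n) ->
  exists n, forall k, P k n.
Proof.
move=> Hmono H; have [f Hf] := choice H.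
exists (\max_k f k)%N => k; apply: Hmono (Hf k); exact: leq_bigmax.
Qed.

Lemma openP_nb (U : Pt -> Prop) x : openP U -> U x ->
  exists n : nat, forall z, nb n.+1%:R^-1 x z -> U z.
Proof.
move=> HU Ux; have [V [HV HV']] := HU x Ux.
have : exists n, forall k, forall a, side (x k) n.+1%:R^-1 a -> V k a.
  apply: finite_max.
  - move=> k a b Hab Ha z Hz; apply: Ha; apply: side_mono Hz; exact: inv_anti.
  - move=> k; have [HVk Vx] := HV k; have [e [He He']] := openA_one HVk Vx.
    have [n Hn] := archi_inv He; exists n => a Ha; apply: He'; apply: side_mono Ha; exact: ltW.
case=> n Hn; exists n => z Hz; apply: HV' => k; exact: Hn.
Qed.

Definition RelA (b : bool) (u v : A) := if b then leA u v else leA v u.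

Lemma openA_rel (c : A) : openA (fun w => RelA (ty c) c w).
Proof.
apply: openA_side => w; rewrite /RelA.
have Ec : tr c = if ty c then 1 else 0 by [].
have Ew : tr w = if ty w then 1 else 0 by [].
have := trP c; have := trP w.
case Hc: (ty c) Ec => Ec; case Hw: (ty w) Ew => Ew HPw HPc; rewrite !leAR => Hcw.
- exists 1; split; first lra; move=> z; rewrite sideR !leAR Ew; have := trP z; lra.
- exists (rr w - rr c); split; first lra; move=> z; rewrite sideR !leAR Ew; have := trP z; lra.
- exists (rr c - rr w); split; first lra; move=> z; rewrite sideR !leAR Ew; have := trP z; lra.
- exists 1; split; first lra; move=> z; rewrite sideR !leAR Ew; have := trP z; lra.
Qed.

Lemma LF (f : Pt -> A) x : contA f ->
  exists n : nat, forall z, nb n.+1%:R^-1 x z -> RelA (ty (f x)) (f x) (f z).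
Proof.
move=> Hf; apply: (@openP_nb (fun z => RelA (ty (f x)) (f x) (f z))); first exact: (Hf _ (@openA_rel (f x))).
rewrite /RelA; case: (ty (f x)); exact: leA_refl.
Qed.

Definition strictB p' q' p q := forall j, p j < p' j /\ q' j < q j.

Lemma baire (S : nat -> Pt -> Prop) (tv : 'I_m -> bool) p q : validB p q ->
  (forall x, inB p q x -> (forall j, ty (x j) = tv j) -> exists k, S k x) ->
  exists k p' q', validB p' q' /\ subB p' q' p q /\ denseB (S k) p' q'.
Proof.
move=> Hv Hcov; apply: contrapT => Hn.
have Hstep : forall k (b : ('I_m -> R) * ('I_m -> R)), exists b' : ('I_m -> R) * ('I_m -> R),
    validB b.1 b.2 -> subB b.1 b.2 p q ->
    validB b'.1 b'.2 /\ strictB b'.1 b'.2 b.1 b.2 /\ forall x, inB b'.1 b'.2 x -> ~ S k x.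
  move=> k [p1 q1] /=.
  case: (pselect (validB p1 q1 /\ subB p1 q1 p q)) => [[Hv1 Hs1]|Hno]; last first.
    by exists (p1, q1) => H1 H2; case: Hno.
  have Hnd : ~ denseB (S k) p1 q1 by move=> Hd; apply: Hn; exists k, p1, q1.
  have [p2 [q2 Hpq]] : exists p2 q2, validB p2 q2 /\ subB p2 q2 p1 q1 /\
      ~ exists x, inB p2 q2 x /\ S k x.
    apply: contrapT => H; apply: Hnd => p2 q2 Hv2 Hs2; apply: contrapT => H2; apply: H.
    by exists p2, q2.
  case: Hpq => Hv2 [Hs2 Hno].
  exists ((fun j => p2 j + (q2 j - p2 j) / 3), (fun j => q2 j - (q2 j - p2 j) / 3)) => _ _ /=.
  split; [|split].
  - move=> j; have := Hv2 j; lra.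
  - move=> j; have := Hv2 j; have := Hs2 j; lra.
  - move=> x Hx HS; apply: Hno; exists x; split=> // j; apply: inI_sub (Hx j); have := Hv2 j; lra.
have [F HF] := choice (fun kb => Hstep kb.1 kb.2).
pose bs := fix bs (k : nat) : ('I_m -> R) * ('I_m -> R) :=
  match k with 0%N => (p, q) | k'.+1 => F (k', bs k') end.
have Hbs : forall k, validB (bs k).1 (bs k).2 /\ subB (bs k).1 (bs k).2 p q.
  elim=> [|k [IH1 IH2]] /=; first by split=> //; exact: subB_refl.
  have [H1 [H2 _]] := HF (k, bs k) IH1 IH2; split=> // j.
  have := H2 j; have := IH2 j; lra.
have Hstr : forall k, strictB (bs k.+1).1 (bs k.+1).2 (bs k).1 (bs k).2.
  by move=> k; have [H1 H2] := Hbs k; have [_ [H _]] := HF (k, bs k) H1 H2.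
have Hav : forall k x, inB (bs k.+1).1 (bs k.+1).2 x -> ~ S k x.
  by move=> k; have [H1 H2] := Hbs k; have [_ [_ H]] := HF (k, bs k) H1 H2.
have Hmono : forall k d j, (bs k).1 j <= (bs (k + d)%N).1 j /\ (bs (k + d)%N).2 j <= (bs k).2 j.
  move=> k d j; elim: d => [|d [IH1 IH2]]; first by rewrite addn0; lra.
  rewrite addnS; have := Hstr (k + d)%N j; lra.
have Hpq : forall k l j, (bs l).1 j < (bs k).2 j.
  move=> k l j; have [Hkl|Hkl] := leqP k l.
  - have [_ H2] := Hmono k (l - k)%N j; rewrite subnKC // in H2.
    have [_ [H3 _]] := (Hbs l).1 j; lra.
  - have [H1 _] := Hmono l (k - l)%N j; rewrite subnKC ?(ltnW Hkl) // in H1.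
    have [_ [H3 _]] := (Hbs k).1 j; lra.
pose s j := sup (fun r => exists k, r = (bs k).1 j).
have Hsup : forall j, has_sup (fun r => exists k, r = (bs k).1 j).
  move=> j; split; first by exists ((bs 0%N).1 j), 0%N.
  exists ((bs 0%N).2 j) => r [k ->]; apply: ltW; exact: Hpq.
have Hs : forall k j, (bs k).1 j < s j /\ s j < (bs k).2 j.
  move=> k j; split.
  - apply: lt_le_trans (Hstr k j).1 _; apply: sup_upper_bound (Hsup j) _ _.
    by exists k.+1.
  - apply: le_lt_trans (Hstr k j).2; apply: ge_sup; first by exists ((bs 0%N).1 j), 0%N.
    move=> r [l ->]; apply: ltW; exact: Hpq.
have Hs01 : forall j, 0 < s j /\ s j < 1.
  move=> j; have [H1 H2] := Hs 0%N j; have := Hv j; simpl in H1, H2; lra.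
pose x := fun j => mkA (s j) (tv j).
have Hx : forall j, rr (x j) = s j /\ ty (x j) = tv j.
  move=> j; apply: mkAE; have := Hs01 j; case: (tv j) => -[H1 H2]; apply/andP; split; lra.
have HxB : forall k, inB (bs k).1 (bs k).2 x.
  move=> k j; have [H1 H2] := Hs k j; apply: inI_strict; rewrite (Hx j).1 //.
have [k Hk] := Hcov x (HxB 0%N) (fun j => (Hx j).2).
exact: Hav k x (HxB k.+1) Hk.
Qed.

End Product.

Inductive mode := Up | Down | Fix.

Section Ext.
Variable R : realType.
Local Notation A := (dA R).
Implicit Types a b c d : A.

Definition relm (mu : mode) a b : Prop :=
  match mu with Up => leA a b | Down => leA b a | Fix => b = a end.

Lemma between4 (u v1 v2 w : R) : u < v1 -> u < v2 -> u < w ->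
  exists z, u < z /\ z < v1 /\ z < v2 /\ z <= w.
Proof.
move=> H1 H2 H3; pose t := Num.min v1 (Num.min v2 w).
have T1 : t <= v1 by rewrite ge_min lexx.
have T2 : t <= v2 by rewrite ge_min ge_min lexx orbT.
have T3 : t <= w by rewrite ge_min ge_min lexx !orbT.
have T4 : u < t by rewrite !lt_min H1 H2 H3.
clearbody t; exists ((u + t) / 2); lra.
Qed.

Lemma between4' (u v1 v2 w : R) : v1 < u -> v2 < u -> w < u ->
  exists z, z < u /\ v1 < z /\ v2 < z /\ w <= z.
Proof.
move=> H1 H2 H3; have [z Hz] := @between4 (- u) (- v1) (- v2) (- w) ltac:(lra) ltac:(lra) ltac:(lra).
exists (- z); lra.
Qed.

Lemma openA_ltc c : openA (fun u => ltA u c).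
Proof. move=> x Hx; exists None, (Some c); split=> //; split=> [b [<-]|y _ H] //; exact: H. Qed.
Lemma openA_gtc c : openA (fun u => ltA c u).
Proof. move=> x Hx; exists (Some c), None; split=> [b [<-]|]//; split=> // y H _; exact: H. Qed.

Lemma sep a b : ltA a b -> exists U W, openA U /\ openA W /\ U a /\ W b /\
  forall u w, U u -> W w -> ltA u w.
Proof.
move=> Hab; case: (pselect (exists c, ltA a c /\ ltA c b)) => [[c [H1 H2]]|Hn].
- exists (fun u => ltA u c), (fun w => ltA c w); do !split => //; try exact: openA_ltc;
    try exact: openA_gtc.
  move=> u w Hu Hw; exact: ltA_trans Hu Hw.
- exists (fun u => ltA u b), (fun w => ltA a w); do !split => //; try exact: openA_ltc;
    try exact: openA_gtc.
  move=> u w Hu Hw; case: (pselect (ltA a u)) => Hau.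
  + by case: Hn; exists u.
  + exact: leA_ltA_trans (not_ltA Hau) Hw.
Qed.

Lemma sepRel o a b : ~ RelA o a b -> exists Ua Ub, openA Ua /\ openA Ub /\ Ua a /\ Ub b /\
  forall u v, Ua u -> Ub v -> ~ RelA o u v.
Proof.
rewrite /RelA; case: o => H.
- have [U [W [HU [HW [Ub [Wa Hsep]]]]]] := sep (not_leA H).
  exists W, U; split=> //; split=> //; split=> //; split=> // u v Hu Hv; exact: ltA_not_leA (Hsep _ _ Hv Hu).
- have [U [W [HU [HW [Ub [Wa Hsep]]]]]] := sep (not_leA H).
  exists U, W; split=> //; split=> //; split=> //; split=> // u v Hu Hv; exact: ltA_not_leA (Hsep _ _ Hu Hv).
Qed.

Lemma right_in a e q' d : tr a = 1 -> q' < rr a + e -> inI (rr a) q' d -> side a e d.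
Proof.
move=> Ha Hq; rewrite /inI sideR !leAR Ha; have := trP d; lra.
Qed.
Lemma left_in a e p' d : tr a = 0 -> rr a - e < p' -> inI p' (rr a) d -> side a e d.
Proof.
move=> Ha Hq; rewrite /inI sideR !leAR Ha; have := trP d; lra.
Qed.

Lemma coord_right a (S : A -> Prop) e q v : tr a = 1 -> 0 < e -> (forall z, side a e z -> S z) ->
  rr a < q -> rr a < v ->
  exists q', rr a < q' /\ q' <= q /\ forall d, inI (rr a) q' d -> S d /\ leA a d /\ rr d < v.
Proof.
move=> Ta He HS Hq Hv; have [z [Z1 [Z2 [Z3 Z4]]]] := @between4 (rr a) (rr a + e) v q ltac:(lra) Hv Hq.
exists z; split=> //; split=> // d Hd; split; first by apply: HS; exact: right_in Ta Z2 Hd.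
move: Hd; rewrite /inI leAR Ta; have := trP d; lra.
Qed.

Lemma coord_left a (S : A -> Prop) e p v : tr a = 0 -> 0 < e -> (forall z, side a e z -> S z) ->
  p < rr a -> v < rr a ->
  exists p', p <= p' /\ p' < rr a /\ forall d, inI p' (rr a) d -> S d /\ leA d a /\ v < rr d.
Proof.
move=> Ta He HS Hp Hv; have [z [Z1 [Z2 [Z3 Z4]]]] := @between4' (rr a) (rr a - e) v p ltac:(lra) Hv Hp.
exists z; split=> //; split=> // d Hd; split; first by apply: HS; exact: left_in Ta Z2 Hd.
move: Hd; rewrite /inI leAR Ta; have := trP d; lra.
Qed.

Lemma inI_facts p q a : inI p q a ->
  p <= rr a /\ rr a <= q /\ (tr a = 0 -> p < rr a) /\ (tr a = 1 -> rr a < q).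
Proof. rewrite /inI; have := trP a; lra. Qed.

Lemma coordA (p q : R) (mu : mode) a b (Va Vb : A -> Prop) :
  0 <= p -> p < q -> q <= 1 -> inI p q a -> inI p q b -> openA Va -> openA Vb ->
  Va a -> Vb b -> relm mu a b ->
  exists p' q' (w : A -> A), 0 <= p' /\ p' < q' /\ q' <= 1 /\ p <= p' /\ q' <= q /\
    forall d, inI p' q' d -> Va d /\ Vb (w d) /\ inI p q (w d) /\ relm mu d (w d).
Proof.
move=> Hp Hpq Hq Ha Hb HVa HVb Vaa Vbb Hrel.
have [ea [Hea Hsa]] := openA_one (openA_and HVa (@inI_open _ p q)) (conj Vaa Ha).
have [eb [Heb Hsb]] := openA_one (openA_and HVb (@inI_open _ p q)) (conj Vbb Hb).
have [Fa1 [Fa2 [Fa3 Fa4]]] := inI_facts Ha; have [Fb1 [Fb2 [Fb3 Fb4]]] := inI_facts Hb.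

have [[Ta|Ta] [Ha0 [Ha1 _]]] := trP a; have [[Tb|Tb] [Hb0 [Hb1 _]]] := trP b;
  [move: (Fa3 Ta) (Fb3 Tb) => Ga Gb | move: (Fa3 Ta) (Fb4 Tb) => Ga Gb |
   move: (Fa4 Ta) (Fb3 Tb) => Ga Gb | move: (Fa4 Ta) (Fb4 Tb) => Ga Gb]; clear Fa3 Fa4 Fb3 Fb4.
-
  case: mu Hrel => /= Hrel.
  + have [p' [P1 [P2 HP]]] := coord_left Ta Hea Hsa (p := p) (v := rr a - 1) ltac:(lra) ltac:(lra).
    exists p', (rr a), (fun _ => b); do 5! (split; first lra).
    move=> d Hd; have [[V1 _] [Hda _]] := HP d Hd; do 3! (split => //); exact: leA_trans Hda Hrel.
  + have [p1 [P1 [P2 HP1]]] := coord_left Tb Heb Hsb (p := p) (v := rr b - 1) ltac:(lra) ltac:(lra).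
    have [E1 E2] := @mkAR0 _ ((p1 + rr b) / 2) ltac:(lra) ltac:(lra).
    have Hb' : inI p1 (rr b) (mkA ((p1 + rr b) / 2) false) by apply: inI_strict; rewrite E1; lra.
    have [[V1 V2] _] := HP1 _ Hb'.
    have Hrab : rr b <= rr a by move: Hrel; rewrite leAR; lra.
    have [p' [P3 [P4 HP]]] := coord_left Ta Hea Hsa (p := p) (v := (p1 + rr b) / 2) ltac:(lra) ltac:(lra).
    exists p', (rr a), (fun _ => mkA ((p1 + rr b) / 2) false); do 5! (split; first lra).
    move=> d Hd; have [[V3 _] [_ Hd2]] := HP d Hd; do 3! (split => //).
    rewrite leAR E1; lra.
  + subst b.
    have [e [Z1 [Z2 [Z3 _]]]] := @between4 0 ea eb 1 Hea Heb ltac:(lra).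
    have Hs : forall z, side a e z -> (Va z /\ inI p q z) /\ (Vb z /\ inI p q z).
      move=> z Hz; split; [apply: Hsa | apply: Hsb]; apply: side_mono Hz; lra.
    have [p' [P1 [P2 HP]]] := coord_left Ta Z1 Hs (p := p) (v := rr a - 1) ltac:(lra) ltac:(lra).
    exists p', (rr a), id; do 5! (split; first lra).
    move=> d Hd; have [[[V1 _] [V2 V3]] _] := HP d Hd; by do 3! (split => //).
-
  case: mu Hrel => /= Hrel.
  + have [p' [P1 [P2 HP]]] := coord_left Ta Hea Hsa (p := p) (v := rr a - 1) ltac:(lra) ltac:(lra).
    exists p', (rr a), (fun _ => b); do 5! (split; first lra).
    move=> d Hd; have [[V1 _] [Hda _]] := HP d Hd; do 3! (split => //); exact: leA_trans Hda Hrel.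
  + have Hrab : rr b < rr a by move: Hrel; rewrite leAR; lra.
    have [p' [P3 [P4 HP]]] := coord_left Ta Hea Hsa (p := p) (v := rr b) ltac:(lra) ltac:(lra).
    exists p', (rr a), (fun _ => b); do 5! (split; first lra).
    move=> d Hd; have [[V3 _] [_ Hd2]] := HP d Hd; do 3! (split => //).
    rewrite leAR; lra.
  + subst b; lra.
-
  case: mu Hrel => /= Hrel.
  + have Hrab : rr a < rr b by move: Hrel; rewrite leAR; lra.
    have [q' [P3 [P4 HP]]] := coord_right Ta Hea Hsa (q := q) (v := rr b) ltac:(lra) ltac:(lra).
    exists (rr a), q', (fun _ => b); do 5! (split; first lra).
    move=> d Hd; have [[V3 _] [_ Hd2]] := HP d Hd; do 3! (split => //).
    rewrite leAR; lra.
  + have [q' [P3 [P4 HP]]] := coord_right Ta Hea Hsa (q := q) (v := rr a + 1) ltac:(lra) ltac:(lra).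
    exists (rr a), q', (fun _ => b); do 5! (split; first lra).
    move=> d Hd; have [[V1 _] [Hda _]] := HP d Hd; do 3! (split => //); exact: leA_trans Hrel Hda.
  + subst b; lra.
-
  case: mu Hrel => /= Hrel.
  + have [q1 [P1 [P2 HP1]]] := coord_right Tb Heb Hsb (q := q) (v := rr b + 1) ltac:(lra) ltac:(lra).
    have [E1 E2] := @mkAR1 _ ((q1 + rr b) / 2) ltac:(lra) ltac:(lra).
    have Hb' : inI (rr b) q1 (mkA ((q1 + rr b) / 2) true) by apply: inI_strict; rewrite E1; lra.
    have [[V1 V2] _] := HP1 _ Hb'.
    have Hrab : rr a <= rr b by move: Hrel; rewrite leAR; lra.
    have [q' [P3 [P4 HP]]] := coord_right Ta Hea Hsa (q := q) (v := (q1 + rr b) / 2) ltac:(lra) ltac:(lra).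
    exists (rr a), q', (fun _ => mkA ((q1 + rr b) / 2) true); do 5! (split; first lra).
    move=> d Hd; have [[V3 _] [_ Hd2]] := HP d Hd; do 3! (split => //).
    rewrite leAR E1; lra.
  + have [q' [P3 [P4 HP]]] := coord_right Ta Hea Hsa (q := q) (v := rr a + 1) ltac:(lra) ltac:(lra).
    exists (rr a), q', (fun _ => b); do 5! (split; first lra).
    move=> d Hd; have [[V1 _] [Hda _]] := HP d Hd; do 3! (split => //); exact: leA_trans Hrel Hda.
  + subst b.
    have [e [Z1 [Z2 [Z3 _]]]] := @between4 0 ea eb 1 Hea Heb ltac:(lra).
    have Hs : forall z, side a e z -> (Va z /\ inI p q z) /\ (Vb z /\ inI p q z).
      move=> z Hz; split; [apply: Hsa | apply: Hsb]; apply: side_mono Hz; lra.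
    have [q' [P1 [P2 HP]]] := coord_right Ta Z1 Hs (q := q) (v := rr a + 1) ltac:(lra) ltac:(lra).
    exists (rr a), q', id; do 5! (split; first lra).
    move=> d Hd; have [[[V1 _] [V2 V3]] _] := HP d Hd; by do 3! (split => //).
Qed.

End Ext.

Section Ext2.
Variable R : realType.
Variable m : nat.
Local Notation A := (dA R).
Local Notation Pt := ('I_m -> dA R).
Implicit Types x y z : Pt.
Implicit Types p q : 'I_m -> R.

Definition Qrel (mu : 'I_m -> mode) x y := forall k, relm (mu k) (x k) (y k).

Lemma ext (f : Pt -> A) (mu : 'I_m -> mode) (o : bool) (D : Pt -> Prop) p q :
  contA f -> validB p q -> denseB D p q ->
  (forall d z, D d -> inB p q d -> inB p q z -> Qrel mu d z -> RelA o (f d) (f z)) ->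
  forall x y, inB p q x -> inB p q y -> Qrel mu x y -> RelA o (f x) (f y).
Proof.
move=> Hf Hv HD Hyp x y Hx Hy Hq; apply: contrapT => Hn.
have [Ua [Ub [HUa [HUb [Uax [Uby Hsep]]]]]] := sepRel Hn.
have [Vx [HVx HVx']] := Hf _ HUa x Uax.
have [Vy [HVy HVy']] := Hf _ HUb y Uby.
have Hc : forall k, exists t : R * R * (A -> A),
    0 <= t.1.1 /\ t.1.1 < t.1.2 /\ t.1.2 <= 1 /\ p k <= t.1.1 /\ t.1.2 <= q k /\
    forall d, inI t.1.1 t.1.2 d -> Vx k d /\ Vy k (t.2 d) /\ inI (p k) (q k) (t.2 d) /\
      relm (mu k) d (t.2 d).
  move=> k; have [H1 [H2 H3]] := Hv k; have [HVxk Vxk] := HVx k; have [HVyk Vyk] := HVy k.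
  have [p' [q' [w H]]] := coordA H1 H2 H3 (Hx k) (Hy k) HVxk HVyk Vxk Vyk (Hq k).
  by exists (p', q', w).
have [F HF] := choice Hc.
pose p' k := (F k).1.1; pose q' k := (F k).1.2; pose w k := (F k).2.
have Hv' : validB p' q' by move=> k; have [? [? [? _]]] := HF k.
have Hs' : subB p' q' p q by move=> k; have [_ [_ [_ [? [? _]]]]] := HF k.
have [d [Hd Dd]] := HD p' q' Hv' Hs'.
pose y' k := w k (d k).
have Hk : forall k, Vx k (d k) /\ Vy k (y' k) /\ inI (p k) (q k) (y' k) /\ relm (mu k) (d k) (y' k).
  move=> k; have [_ [_ [_ [_ [_ H]]]]] := HF k; exact: H (Hd k).
have := Hyp d y' Dd (inB_sub Hs' Hd) (fun k => (Hk k).2.2.1) (fun k => (Hk k).2.2.2).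
apply: Hsep; [apply: HVx' => k; exact: (Hk k).1 | apply: HVy' => k; exact: (Hk k).2.1].
Qed.

End Ext2.

Section Steps.
Variable R : realType.
Variable m : nat.
Local Notation A := (dA R).
Local Notation Pt := ('I_m -> dA R).
Implicit Types x y z : Pt.
Implicit Types p q : 'I_m -> R.

Lemma neq_negb (a b : bool) : a != b -> a = ~~ b. Proof. by case: a; case: b. Qed.

Lemma RelA_antisym o (u v : A) : RelA o u v -> RelA o v u -> u = v.
Proof. by rewrite /RelA; case: o => H1 H2; apply: leA_antisym. Qed.
Lemma RelA_neg o (u v : A) : RelA (~~ o) u v -> RelA o v u.
Proof. by rewrite /RelA; case: o. Qed.

Definition Mono (f : Pt -> A) o p q := forall x y, inB p q x -> inB p q y ->
  (forall k, leA (x k) (y k)) -> RelA o (f x) (f y).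
Definition Indep (f : Pt -> A) j p q := forall x y, inB p q x -> inB p q y ->
  (forall k, k != j -> x k = y k) -> f x = f y.
Definition Only (f : Pt -> A) j p q := forall x y, inB p q x -> inB p q y ->
  x j = y j -> f x = f y.

Lemma shrink p q (e : R) : validB p q -> 0 < e ->
  exists q', validB p q' /\ subB p q' p q /\ forall j, q' j - p j < e.
Proof.
move=> Hv He; exists (fun j => Num.min (q j) (p j + e / 2)); split; [|split].
- move=> j; have := Hv j; have : Num.min (q j) (p j + e / 2) <= q j by rewrite ge_min lexx.
  have : p j < Num.min (q j) (p j + e / 2) by rewrite lt_min; apply/andP; split; have := Hv j; lra.
  lra.
- move=> j; split=> //; by rewrite ge_min lexx.
- move=> j; have : Num.min (q j) (p j + e / 2) <= p j + e / 2 by rewrite ge_min lexx orbT.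
  lra.
Qed.

Lemma code_nat (b : bool) (n : nat) : odd (b + n.*2) = b /\ (b + n.*2)./2 = n.
Proof. by rewrite oddD odd_double addbF half_bit_double; case: b. Qed.

Lemma width_nb (e : R) p q d z (tv : 'I_m -> bool) :
  (forall j, q j - p j < e) -> inB p q d -> inB p q z -> (forall j, ty (d j) = tv j) ->
  (forall j, if tv j then leA (d j) (z j) else leA (z j) (d j)) -> nb e d z.
Proof.
move=> Hw Hd Hz Ht Hr j; rewrite /side Ht; have := Hr j; have := Hw j.
have [? ?] := inI_r (Hd j); have [? ?] := inI_r (Hz j).
case: (tv j) => H1 H2; split=> //; lra.
Qed.

Variable f : Pt -> A.
Hypothesis Hf : contA f.

Lemma mono_step p q : validB p q -> exists o p' q', validB p' q' /\ subB p' q' p q /\ Mono f o p' q'.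
Proof.
move=> Hv.
pose S k x := (forall j, ty (x j) = true) /\
  forall z, nb ((k./2).+1%:R^-1) x z -> RelA (odd k) (f x) (f z).
have [k [p1 [q1 [Hv1 [Hs1 Hd1]]]]] : exists k p' q', validB p' q' /\ subB p' q' p q /\ denseB (S k) p' q'.
  apply: (@baire _ _ S (fun _ => true)) => // x Hx Ht.
  have [n Hn] := LF x Hf; exists (ty (f x) + n.*2)%N.
  have [E1 E2] := code_nat (ty (f x)) n; rewrite /S E1 E2; split=> //.
have Hpos : (0 : R) < (k./2).+1%:R^-1 by rewrite invr_gt0 ltr0n.
have [q2 [Hv2 [Hs2 Hw2]]] := shrink Hv1 Hpos.
exists (odd k), p1, q2; split=> //; split; first exact: subB_trans Hs2 Hs1.
move=> x y Hx Hy Hxy.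
apply: (@ext _ _ f (fun _ => Up) (odd k) (S k) p1 q2) => //.
- exact: denseB_sub Hd1 Hs2.
- move=> d z [Ht Hd] Hdin Hzin Hq; apply: Hd; apply: (@width_nb _ p1 q2 d z (fun _ => true)) => //.
Qed.

Lemma indep_step o j p q : validB p q -> Mono f o p q ->
  exists p' q', validB p' q' /\ subB p' q' p q /\ (Indep f j p' q' \/ Only f j p' q').
Proof.
move=> Hv Hmono.
pose S k x := (forall l, ty (x l) = (l != j)) /\
  forall z, nb ((k./2).+1%:R^-1) x z -> RelA (odd k) (f x) (f z).
have [k [p1 [q1 [Hv1 [Hs1 Hd1]]]]] : exists k p' q', validB p' q' /\ subB p' q' p q /\ denseB (S k) p' q'.
  apply: (@baire _ _ S (fun l => l != j)) => // x Hx Ht.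
  have [n Hn] := LF x Hf; exists (ty (f x) + n.*2)%N.
  have [E1 E2] := code_nat (ty (f x)) n; rewrite /S E1 E2; split=> //.
have Hpos : (0 : R) < (k./2).+1%:R^-1 by rewrite invr_gt0 ltr0n.
have [q2 [Hv2 [Hs2 Hw2]]] := shrink Hv1 Hpos.
have Hs21 := subB_trans Hs2 Hs1.
have Hd2 := denseB_sub Hd1 Hs2.
have Hmono2 : Mono f o p1 q2.
  by move=> x y Hx Hy; apply: Hmono; [exact: inB_sub Hs21 Hx | exact: inB_sub Hs21 Hy].
exists p1, q2; split=> //; split=> //.
case: (boolP (odd k == o)) => Hko.
-
  left.
  have Hext : forall x y, inB p1 q2 x -> inB p1 q2 y ->
      Qrel (fun l => if l == j then Down else Fix) x y -> RelA (odd k) (f x) (f y).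
    apply: (@ext _ _ f _ (odd k) (S k) p1 q2) => //.
    move=> d z [Ht Hd] Hdin Hzin Hq; apply: Hd.
    apply: (@width_nb _ p1 q2 d z (fun l => l != j)) => // l; have := Hq l; rewrite /relm.
    case: eqP => [->|_] /=; first by [].
    by move=> ->; apply: leA_refl.
  have Heq : forall x y, inB p1 q2 x -> inB p1 q2 y ->
      Qrel (fun l => if l == j then Down else Fix) x y -> f x = f y.
    move=> x y Hx Hy Hq; apply: RelA_antisym (Hext x y Hx Hy Hq) _.
    rewrite (eqP Hko); apply: Hmono2 => // l; have := Hq l; rewrite /relm.
    by case: eqP => _ //= ->; apply: leA_refl.
  move=> x y Hx Hy Hoff; case: (leA_total (y j) (x j)) => Hj.
  + apply: Heq => // l; rewrite /relm; case: eqP => [->|/eqP Hl] //=.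
    by rewrite (Hoff l Hl).
  + symmetry; apply: Heq => // l; rewrite /relm; case: eqP => [->|/eqP Hl] //=.
    by rewrite (Hoff l Hl).
-
  right.
  have Hko' : odd k = ~~ o by apply: neq_negb.
  have Hext : forall x y, inB p1 q2 x -> inB p1 q2 y ->
      Qrel (fun l => if l == j then Fix else Up) x y -> RelA (odd k) (f x) (f y).
    apply: (@ext _ _ f _ (odd k) (S k) p1 q2) => //.
    move=> d z [Ht Hd] Hdin Hzin Hq; apply: Hd.
    apply: (@width_nb _ p1 q2 d z (fun l => l != j)) => // l; have := Hq l; rewrite /relm.
    case: eqP => [->|_] /=; last by [].
    by move=> ->; apply: leA_refl.
  have Heq : forall x y, inB p1 q2 x -> inB p1 q2 y ->
      Qrel (fun l => if l == j then Fix else Up) x y -> f x = f y.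
    move=> x y Hx Hy Hq; apply: RelA_antisym.
    + apply: Hmono2 => // l; have := Hq l; rewrite /relm.
      by case: eqP => _ //= ->; apply: leA_refl.
    + apply: RelA_neg; rewrite -Hko'; exact: Hext.
  move=> x y Hx Hy Hxy.
  pose z := fun l => if `[< leA (x l) (y l) >] then x l else y l.
  have Hz : inB p1 q2 z by move=> l; rewrite /z; case: ifP => _; [exact: Hx | exact: Hy].
  have Hzx : Qrel (fun l => if l == j then Fix else Up) z x.
    move=> l; rewrite /relm /z; case: eqP => [->|_] /=.
    + by case: ifP.
    + case: ifP => [_|/asboolPn H]; first exact: leA_refl.
      by left; apply: not_leA.
  have Hzy : Qrel (fun l => if l == j then Fix else Up) z y.
    move=> l; rewrite /relm /z; case: eqP => [->|_] /=.
    + by case: ifP.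
    + case: ifP => [/asboolP H|_] //; exact: leA_refl.
  by rewrite -(Heq z x) // (Heq z y).
Qed.

End Steps.

Section Iter.
Variable R : realType.
Variable m : nat.
Local Notation Pt := ('I_m -> dA R).
Implicit Types p q : 'I_m -> R.

Lemma iterB (T : eqType) (l : seq T) (P : T -> ('I_m -> R) -> ('I_m -> R) -> Prop) p0 q0 :
  validB p0 q0 ->
  (forall t, t \in l -> forall p q p' q', subB p' q' p q -> validB p' q' -> P t p q -> P t p' q') ->
  (forall t, t \in l -> forall p q, validB p q -> subB p q p0 q0 ->
     exists p' q', validB p' q' /\ subB p' q' p q /\ P t p' q') ->
  exists p q, validB p q /\ subB p q p0 q0 /\ forall t, t \in l -> P t p q.
Proof.
move=> Hv0; elim: l => [|t l IH] Hher Hstep.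
- by exists p0, q0; split=> //; split=> //; exact: subB_refl.
- have Hin : forall t', t' \in l -> t' \in t :: l by move=> t' Ht'; rewrite inE Ht' orbT.
  have [p [q [Hv [Hs HP]]]] := IH (fun t' Ht' => Hher t' (Hin _ Ht'))
    (fun t' Ht' => Hstep t' (Hin _ Ht')).
  have [p' [q' [Hv' [Hs' HP']]]] := Hstep t (mem_head _ _) p q Hv Hs.
  exists p', q'; split=> //; split; first exact: subB_trans Hs' Hs.
  move=> t'; rewrite inE => /orP [/eqP ->|Ht'] //.
  exact: Hher t' (Hin _ Ht') p q p' q' Hs' Hv' (HP t' Ht').
Qed.

End Iter.

Section Core1.
Variable R : realType.
Variable m : nat.
Local Notation A := (dA R).
Local Notation Pt := ('I_m -> dA R).
Implicit Types x y z : Pt.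
Implicit Types p q : 'I_m -> R.
Variables h g : Pt -> Pt.
Hypothesis gh : forall x, g (h x) = x.
Hypothesis hg : forall y, h (g y) = y.
Hypothesis ch : continuousP h.
Hypothesis cg : continuousP g.

Lemma cont_coord i : contA (fun x => h x i).
Proof. move=> V HV; have := ch (@openP_proj R m V i HV); by []. Qed.

Lemma mono_hered f o p q p' q' : subB p' q' p q -> Mono f o p q -> Mono f o p' q'.
Proof. move=> Hs H x y Hx Hy; apply: H; exact: inB_sub Hs _. Qed.
Lemma indep_hered f j p q p' q' : subB p' q' p q -> Indep f j p q -> Indep f j p' q'.
Proof. move=> Hs H x y Hx Hy; apply: H; exact: inB_sub Hs _. Qed.
Lemma only_hered f j p q p' q' : subB p' q' p q -> Only f j p q -> Only f j p' q'.
Proof. move=> Hs H x y Hx Hy; apply: H; exact: inB_sub Hs _. Qed.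

Lemma box2 p0 q0 : validB p0 q0 -> exists p q, validB p q /\ subB p q p0 q0 /\
  (forall i, exists o, Mono (fun x => h x i) o p q) /\
  (forall i j, Indep (fun x => h x i) j p q \/ Only (fun x => h x i) j p q).
Proof.
move=> Hv0.
have [p1 [q1 [Hv1 [Hs1 HM]]]] := @iterB R m _ (enum 'I_m)
   (fun i p q => exists o, Mono (fun x => h x i) o p q) p0 q0 Hv0
   (fun i _ p q p' q' Hs _ '(ex_intro o H) => ex_intro _ o (mono_hered Hs H))
   (fun i _ p q Hv _ => let '(ex_intro o (ex_intro p' (ex_intro q' (conj a (conj b c))))) :=
        mono_step (@cont_coord i) Hv in
      ex_intro _ p' (ex_intro _ q' (conj a (conj b (ex_intro _ o c))))).
have HM' : forall i, exists o, Mono (fun x => h x i) o p1 q1 by move=> i; apply: HM; rewrite mem_enum.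
have [p2 [q2 [Hv2 [Hs2 HI]]]] := @iterB R m _ (enum {: 'I_m * 'I_m})
   (fun t p q => Indep (fun x => h x t.1) t.2 p q \/ Only (fun x => h x t.1) t.2 p q) p1 q1 Hv1
   (fun t _ p q p' q' Hs _ H => match H with
       | or_introl H1 => or_introl (indep_hered Hs H1)
       | or_intror H1 => or_intror (only_hered Hs H1) end)
   (fun t _ p q Hv Hs => let '(ex_intro o Ho) := HM' t.1 in
       indep_step (@cont_coord t.1) t.2 Hv (mono_hered Hs Ho)).
exists p2, q2; split=> //; split; first exact: subB_trans Hs2 Hs1.
split.
- move=> i; have [o Ho] := HM' i; exists o; exact: mono_hered Hs2 Ho.
- move=> i j; exact: (HI (i, j) (mem_enum _ _)).
Qed.

End Core1.

Section Misc.
Variable R : realType.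
Local Notation A := (dA R).

Lemma inI_conv_le p q (u v w : A) : inI p q u -> inI p q w -> leA u v -> leA v w -> inI p q v.
Proof.
move=> [Hu _] [_ Hw]; rewrite !leAR => Huv Hvw; split.
- move: Hu Huv; have := trP u; have := trP v; lra.
- move: Hw Hvw; have := trP w; have := trP v; lra.
Qed.

Lemma openA_ext (U V : A -> Prop) : (forall a, U a <-> V a) -> openA U -> openA V.
Proof.
move=> E HU x /E Ux; have [lo [hi [H1 [H2 H3]]]] := HU x Ux; exists lo, hi; do 2 split => //.
by move=> y Hl Hh; apply/E; apply: H3.
Qed.

Lemma clopen_around (V : A -> Prop) (c : A) : openA V -> V c ->
  exists p' q', 0 <= p' /\ p' < q' /\ q' <= 1 /\ inI p' q' c /\ forall d, inI p' q' d -> V d.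
Proof.
move=> HV Vc; have [e [He Hs]] := openA_one HV Vc.
have [[Tc|Tc] [Hc0 [Hc1 [Hc2 Hc3]]]] := trP c.
- have Hc := Hc3 Tc.
  have [z [Z1 [Z2 [Z3 Z4]]]] := @between4' R (rr c) (rr c - e) 0 0 ltac:(lra) Hc Hc.
  exists z, (rr c); do 3! (split; first lra); split.
  + rewrite /inI; lra.
  + move=> d Hd; apply: Hs; exact: left_in Tc Z2 Hd.
- have Hc := Hc2 Tc.
  have [z [Z1 [Z2 [Z3 Z4]]]] := @between4 R (rr c) (rr c + e) 1 1 ltac:(lra) Hc Hc.
  exists (rr c), z; do 3! (split; first lra); split.
  + rewrite /inI; lra.
  + move=> d Hd; apply: Hs; exact: right_in Tc Z2 Hd.
Qed.

End Misc.

Section Core2.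
Variable R : realType.
Variable m : nat.
Local Notation A := (dA R).
Local Notation Pt := ('I_m -> dA R).
Implicit Types x y z : Pt.
Variables h g : Pt -> Pt.
Hypothesis gh : forall x, g (h x) = x.
Hypothesis hg : forall y, h (g y) = y.
Hypothesis ch : continuousP h.
Hypothesis cg : continuousP g.

Lemma inB_upd p q x j a : inB p q x -> inI (p j) (q j) a -> inB p q (upd x j a).
Proof. move=> Hx Ha k; rewrite /upd; case: eqP => [->|_] //. Qed.

Lemma not_const p q i : validB p q ->
  ~ (forall x y, inB p q x -> inB p q y -> h x i = h y i).
Proof.
move=> Hv Hc; pose x0 := midB p q; have Hx0 : inB p q x0 by exact: midB_in.
have HB : openP (fun y => inB p q (g y)) by have := cg (@openP_inB R m p q).
have Hy0 : inB p q (g (h x0)) by rewrite gh.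
have [V [HV HV']] := HB (h x0) Hy0.
have [HVi Vi] := HV i; have [z [Vz Hz]] := openA_not_empty HVi Vi.
have Hy : inB p q (g (upd (h x0) i z)).
  apply: HV' => k; rewrite /upd; case: eqP => [->|_] //; exact: (HV k).2.
have := Hc _ _ Hy Hx0; rewrite hg upd_eq; exact: Hz.
Qed.

Lemma all_indep_const p q i : (forall j, Indep (fun x => h x i) j p q) ->
  forall x y, inB p q x -> inB p q y -> h x i = h y i.
Proof.
move=> HI x y Hx Hy.
pose z (l : nat) : Pt := fun k => if (k < l)%N then y k else x k.
have Hz : forall l, inB p q (z l) by move=> l k; rewrite /z; case: ifP.
have H : forall l, (l <= m)%N -> h (z l) i = h x i.
  elim=> [|l IH] Hl.
  - congr (h _ i); apply: functional_extensionality_dep => k; by rewrite /z.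
  - rewrite -(IH (ltnW Hl)); apply: (HI (Ordinal Hl)) => // k Hk.
    rewrite /z; have Hk' : (k : nat) != l by move: Hk; apply: contra => /eqP Ek; apply/eqP; apply: val_inj.
    by rewrite ltnS leq_eqVlt (negbTE Hk').
have E : z m = y by apply: functional_extensionality_dep => k; rewrite /z ltn_ord.
by rewrite -E H.
Qed.

Lemma exists_only p q i : validB p q ->
  (forall j, Indep (fun x => h x i) j p q \/ Only (fun x => h x i) j p q) ->
  exists j, Only (fun x => h x i) j p q.
Proof.
move=> Hv HIO; apply: contrapT => Hn; apply: (not_const (i := i) Hv).
apply: all_indep_const => j; case: (HIO j) => // H; case: Hn; by exists j.
Qed.

End Core2.

Section Core3.
Variable R : realType.
Variable m : nat.
Local Notation A := (dA R).
Local Notation Pt := ('I_m -> dA R).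
Implicit Types x y z : Pt.
Variables h g : Pt -> Pt.
Hypothesis gh : forall x, g (h x) = x.
Hypothesis hg : forall y, h (g y) = y.
Hypothesis ch : continuousP h.
Hypothesis cg : continuousP g.
Variables p q : 'I_m -> R.
Hypothesis Hv : validB p q.
Variables sg tau : 'I_m -> 'I_m.
Hypothesis Hst : forall k, tau (sg k) = k.
Hypothesis Hts : forall i, sg (tau i) = i.
Hypothesis Honly : forall j, Only (fun x => h x (sg j)) j p q.
Hypothesis Hmono : forall i, exists o, Mono (fun x => h x i) o p q.

Let x0 := midB p q.
Let Hx0 : inB p q x0. Proof. exact: midB_in. Qed.
Let y0 := h x0.

Definition phi j a := h (upd x0 j a) (sg j).
Definition psi j v := g (upd y0 (sg j) v) j.

Lemma sg_inj : injective sg.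
Proof. by move=> a b E; rewrite -(Hst a) -(Hst b) E. Qed.

Lemma L_hx x : inB p q x -> forall j, h x (sg j) = phi j (x j).
Proof.
move=> Hx j; apply: Honly => //; first exact: inB_upd.
by rewrite upd_eq.
Qed.

Lemma L_hupd j a : inI (p j) (q j) a -> h (upd x0 j a) = upd y0 (sg j) (phi j a).
Proof.
move=> Ha; have Hu : inB p q (upd x0 j a) by exact: inB_upd.
apply: functional_extensionality_dep => i; rewrite -(Hts i).
case: (eqVneq (tau i) j) => [->|Hk]; first by rewrite upd_eq.
rewrite upd_neq; last by apply: contra Hk => /eqP /sg_inj ->.
rewrite (L_hx Hu) upd_neq // /y0 (L_hx Hx0) //.
Qed.

Lemma L_inj j a b : inI (p j) (q j) a -> inI (p j) (q j) b -> phi j a = phi j b -> a = b.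
Proof.
move=> Ha Hb E; have := L_hupd Ha; rewrite E -(L_hupd Hb) => E2.
have := congr1 (fun x => g x j) E2; rewrite !gh !upd_eq; by [].
Qed.

Lemma L_mono j : exists o, forall a b, inI (p j) (q j) a -> inI (p j) (q j) b -> leA a b ->
  RelA o (phi j a) (phi j b).
Proof.
have [o Ho] := Hmono (sg j); exists o => a b Ha Hb Hab; apply: Ho; try exact: inB_upd.
move=> k; rewrite /upd; case: eqP => // _; exact: leA_refl.
Qed.

Lemma L_strict j (S : A -> Prop) : (forall a, S a -> inI (p j) (q j) a) -> strictly_monotone_onA S (phi j).
Proof.
move=> HS; have [o Ho] := L_mono j.
have Hne : forall a b, S a -> S b -> ltA a b -> phi j a <> phi j b.
  move=> a b Sa Sb Hab E; have := L_inj (HS a Sa) (HS b Sb) E => Eab.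
  by rewrite Eab in Hab; apply: ltA_irr Hab.
case: o Ho => Ho; [left|right] => a b Sa Sb Hab; have := Ho a b (HS a Sa) (HS b Sb) (ltA_leA Hab);
  rewrite /RelA; case=> [H|H] //; case: (Hne a b Sa Sb Hab); by rewrite H.
Qed.

Lemma phi_cont j V : openA V -> openA (fun a => V (phi j a)).
Proof. move=> HV; exact: (@openP_upd R m _ x0 j (@cont_coord R m h ch (sg j) V HV)). Qed.

Lemma psi_cont j V : openA V -> openA (fun v => V (psi j v)).
Proof. move=> HV; exact: (@openP_upd R m _ y0 (sg j) (cg (@openP_proj R m V j HV))). Qed.

Lemma HB_open : openP (fun y => inB p q (g y)).
Proof. by have := cg (@openP_inB R m p q). Qed.

Lemma J_exists j : exists pj qj, 0 <= pj /\ pj < qj /\ qj <= 1 /\ inI pj qj (phi j (x0 j)) /\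
  forall v, inI pj qj v -> inB p q (g (upd y0 (sg j) v)).
Proof.
have Hy0 : inB p q (g y0) by rewrite /y0 gh.
have [V [HV HV']] := HB_open Hy0.
have [HVj Vj] := HV (sg j).
have E : y0 (sg j) = phi j (x0 j) by rewrite /y0 (L_hx Hx0).
rewrite E in Vj.
have [pj [qj [H1 [H2 [H3 [H4 H5]]]]]] := clopen_around HVj Vj.
exists pj, qj; split=> //; split=> //; split=> //; split=> // v Hvv; apply: HV' => k; rewrite /upd.
case: eqP => [->|_]; [exact: H5 | exact: (HV k).2].
Qed.

Lemma box_final : exists (I : 'I_m -> A -> Prop) (hs : 'I_m -> A -> A),
  (forall j, clopen_intervalA (I j)) /\ (forall x, (forall j, I j (x j)) -> inB p q x) /\
  (forall j, strictly_monotone_onA (I j) (hs j) /\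
     exists J, clopen_intervalA J /\ homeo_ontoA (I j) J (hs j)) /\
  (forall x, (forall j, I j (x j)) -> forall j, h x (sg j) = hs j (x j)).
Proof.
have HJ : forall j, exists t : R * R, 0 <= t.1 /\ t.1 < t.2 /\ t.2 <= 1 /\
    inI t.1 t.2 (phi j (x0 j)) /\ forall v, inI t.1 t.2 v -> inB p q (g (upd y0 (sg j) v)).
  move=> j; have [pj [qj H]] := J_exists j; by exists (pj, qj).
have [F HF] := choice HJ.
pose I j a := inI (p j) (q j) a /\ inI (F j).1 (F j).2 (phi j a).
have HIB : forall x, (forall j, I j (x j)) -> inB p q x by move=> x Hx j; exact: (Hx j).1.
exists I, phi; split; [|split=> //; split].
- move=> j; have [F1 [F2 [F3 [F4 F5]]]] := HF j; split; [|split].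
  + by exists (x0 j); split=> //; exact: Hx0.
  + move=> a b c [Ia Ja] [Ic Jc] Hab Hbc; split; first exact: inI_conv Ia Ic Hab Hbc.
    have [o Ho] := L_mono j; have Ib : inI (p j) (q j) b by exact: inI_conv Ia Ic Hab Hbc.
    have H1 := Ho a b Ia Ib (ltA_leA Hab); have H2 := Ho b c Ib Ic (ltA_leA Hbc).
    move: H1 H2; rewrite /RelA; clear Ho; case: o => H1 H2.
    * exact: inI_conv_le Ja Jc H1 H2.
    * exact: inI_conv_le Jc Ja H2 H1.
  + split.
    * apply: openA_and; first exact: inI_open.
      exact: phi_cont (@inI_open R (F j).1 (F j).2).
    * apply: (@openA_ext _ (fun a => ~ inI (p j) (q j) a \/ ~ inI (F j).1 (F j).2 (phi j a))).
        by move=> a; rewrite /I; symmetry; exact: not_andP.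
      apply: openA_or; first exact: inI_copen.
      exact: phi_cont (@inI_copen R (F j).1 (F j).2).
- move=> j; have [F1 [F2 [F3 [F4 F5]]]] := HF j; split.
  + by apply: L_strict => a [].
  + exists (inI (F j).1 (F j).2); split; first exact: inI_clopen.
    exists (psi j); split; [|split; [|split]].
    * move=> a [Ia Ja]; split=> //.
      by rewrite /psi -(L_hupd Ia) gh upd_eq.
    * move=> v Hvv; have Hx' := F5 v Hvv.
      have E : phi j (psi j v) = v by rewrite /psi -(L_hx Hx') hg upd_eq.
      split; last exact: E.
      split; first exact: Hx' j.
      by rewrite E.
    * move=> V HV; exists (fun a => V (phi j a)); split=> //; exact: phi_cont.
    * move=> V HV; exists (fun v => V (psi j v)); split=> //; exact: psi_cont.
- move=> x Hx j; exact: L_hx (HIB x Hx) j.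
Qed.

End Core3.

Section Core4.
Variable R : realType.
Variable m : nat.
Local Notation A := (dA R).
Local Notation Pt := ('I_m -> dA R).
Implicit Types x y z : Pt.
Variables h g : Pt -> Pt.
Hypothesis gh : forall x, g (h x) = x.
Hypothesis hg : forall y, h (g y) = y.
Hypothesis ch : continuousP h.
Hypothesis cg : continuousP g.

Lemma core p0 q0 : validB p0 q0 ->
  exists I : 'I_m -> A -> Prop,
    (forall j, clopen_intervalA (I j)) /\ (forall x, (forall j, I j (x j)) -> inB p0 q0 x) /\
    exists (hs : 'I_m -> A -> A) (tau : 'I_m -> 'I_m),
       bijective tau /\
       (forall j, strictly_monotone_onA (I j) (hs j) /\
          exists J, clopen_intervalA J /\ homeo_ontoA (I j) J (hs j)) /\
       (forall x, (forall j, I j (x j)) -> forall j, h x (tau j) = hs j (x j)).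
Proof.
move=> Hv0; have [p [q [Hv [Hs [HM HIO]]]]] := box2 ch Hv0.
have Hex : forall i, exists j, Only (fun x => h x i) j p q.
  move=> i; exact: (exists_only gh hg cg Hv (HIO i)).
have [tp Htp] := choice Hex.
have Hsurj : forall k, exists i, tp i = k.
  move=> k; apply: contrapT => Hn.
  pose x0 := midB p q; have Hx0 : inB p q x0 by exact: midB_in.
  have [z [Hz Hzne]] := openA_not_empty (@inI_open R (p k) (q k)) (Hx0 k).
  have Hx1 : inB p q (upd x0 k z) by exact: inB_upd.
  have E : h (upd x0 k z) = h x0.
    apply: functional_extensionality_dep => i; apply: (Htp i) => //.
    rewrite upd_neq // ; apply/eqP => Ei; apply: Hn; by exists i.
  have := congr1 (fun x => g x k) E; rewrite !gh upd_eq; exact: Hzne.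
have [sg Hsg] := choice Hsurj.
have Hsg_inj : injective sg by move=> a b E; rewrite -(Hsg a) -(Hsg b) E.
have Hbij := injF_bij Hsg_inj.
have Hts : forall i, sg (tp i) = i.
  move=> i; case: Hbij => sinv H1 H2; by rewrite -{1}(H2 i) Hsg.
have Honly : forall j, Only (fun x => h x (sg j)) j p q.
  by move=> j; have := Htp (sg j); rewrite Hsg.
have [I [hs [H1 [H2 [H3 H4]]]]] := box_final gh hg ch cg Hv Hsg Hts Honly HM.
exists I; split=> //; split.
- move=> x Hx; exact: inB_sub Hs (H2 x Hx).
- by exists hs, sg.
Qed.

End Core4.

Section Final.
Variable R : realType.
Variable m : nat.
Local Notation A := (dA R).
Local Notation Pt := ('I_m -> dA R).
Implicit Types x y z : Pt.

Definition boxI (I : 'I_m -> A -> Prop) x := forall j, I j (x j).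

Lemma box_in_open (O : Pt -> Prop) x : openP O -> O x ->
  exists p q, validB p q /\ inB p q x /\ forall y, inB p q y -> O y.
Proof.
move=> HO Ox; have [V [HV HV']] := HO x Ox.
have Hc : forall j, exists t : R * R, 0 <= t.1 /\ t.1 < t.2 /\ t.2 <= 1 /\ inI t.1 t.2 (x j) /\
    forall d, inI t.1 t.2 d -> V j d.
  move=> j; have [HVj Vj] := HV j; have [p' [q' H]] := clopen_around HVj Vj; by exists (p', q').
have [F HF] := choice Hc.
exists (fun j => (F j).1), (fun j => (F j).2); split; [|split].
- by move=> j; have [? [? [? _]]] := HF j.
- by move=> j; have [_ [_ [_ [? _]]]] := HF j.
- move=> y Hy; apply: HV' => j; have [_ [_ [_ [_ H]]]] := HF j; exact: H (Hy j).
Qed.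

Lemma openP_notbox (I : 'I_m -> A -> Prop) : (forall j, clopen_intervalA (I j)) ->
  openP (fun x => ~ boxI I x).
Proof.
move=> HI x Hx; have [j Hj] : exists j, ~ I j (x j).
  by apply: contrapT => Hn; apply: Hx => j; apply: contrapT => H; apply: Hn; exists j.
exists (fun k => if k == j then (fun a => ~ I j a) else (fun _ => True)); split.
- move=> k; case: (eqVneq k j) => [->|Hk].
  + by split=> //; exact: (HI j).2.2.2.
  + by split=> //; exact: openA_T.
- move=> y Hy Hb; have := Hy j; rewrite eqxx; apply; exact: Hb j.
Qed.

Lemma openP_ext_helper (U V : Pt -> Prop) : (forall x, U x <-> V x) -> openP U -> openP V.
Proof.
move=> E HU x /E Ux; have [W [H1 H2]] := HU x Ux; exists W; split=> // y Hy; apply/E; exact: H2.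
Qed.

Lemma openP_not0 : openP (fun x : Pt => ~ False).
Proof. move=> x _; exists (fun _ _ => True); split; [move=> j; split=> //; exact: openA_T | by move=> y _ []]. Qed.

Lemma boxI_nonempty (I : 'I_m -> A -> Prop) : (forall j, clopen_intervalA (I j)) -> exists x, boxI I x.
Proof.
move=> HI; have [F HF] := choice (fun j => (HI j).1); by exists F.
Qed.

Variables h g : Pt -> Pt.
Hypothesis gh : forall x, g (h x) = x.
Hypothesis hg : forall y, h (g y) = y.
Hypothesis ch : continuousP h.
Hypothesis cg : continuousP g.
Hypothesis hm : (0 < m)%N.

Definition goodI (O : Pt -> Prop) (I : 'I_m -> A -> Prop) :=
  (forall j, clopen_intervalA (I j)) /\ (forall x, boxI I x -> O x) /\
  (exists x, O x /\ ~ boxI I x) /\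
  exists (hs : 'I_m -> A -> A) (tau : 'I_m -> 'I_m),
       bijective tau /\
       (forall j, strictly_monotone_onA (I j) (hs j) /\
          exists J, clopen_intervalA J /\ homeo_ontoA (I j) J (hs j)) /\
       (forall x, boxI I x -> forall j, h x (tau j) = hs j (x j)).

Lemma good (O : Pt -> Prop) : openP O -> (exists x, O x) -> exists I, goodI O I.
Proof.
move=> HO [x Ox]; have [p [q [Hv [_ HO']]]] := box_in_open HO Ox.
pose j0 := Ordinal hm.
pose p1 := fun j => if j == j0 then (p j + q j) / 2 else p j.
have Hv1 : validB p1 q.
  move=> j; rewrite /p1; have := Hv j; case: eqP => _; lra.
have Hs1 : subB p1 q p q.
  move=> j; rewrite /p1; have := Hv j; case: eqP => _ H; split; lra.
have [I [HI [HIB H]]] := core gh hg ch cg Hv1.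
exists I; split=> //; split; first by move=> y Hy; apply: HO'; apply: inB_sub Hs1 (HIB y Hy).
split=> //.
pose x' := fun j => if j == j0 then mkA (p j0) true else midB p q j.
have [E1 E2] : rr (mkA (p j0) true) = p j0 /\ tr (mkA (p j0) true) = 1.
  by have := Hv j0; move=> [? [? ?]]; apply: mkAR1; lra.
have Hx' : inB p q x'.
  move=> j; rewrite /x'; case: eqP => [->|_]; last exact: midB_in.
  rewrite /inI E1 E2; have := Hv j0; lra.
exists x'; split; first exact: HO'.
move=> Hb; have := HIB x' Hb j0; rewrite /x' eqxx /inI E1 E2 /p1 eqxx.
have := Hv j0; lra.
Qed.

Definition Gd (O : Pt -> Prop) : 'I_m -> A -> Prop :=
  match pselect (openP O /\ exists x, O x) with
  | left H => proj1_sig (cid (good H.1 H.2))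
  | right _ => fun _ _ => False
  end.

Lemma GdP O : openP O -> (exists x, O x) -> goodI O (Gd O).
Proof.
move=> H1 H2; rewrite /Gd; case: pselect => [H|]; last by case.
exact: proj2_sig (cid (good H.1 H.2)).
Qed.

Definition Qb (k : nat) : ('I_m -> R) * ('I_m -> R) :=
  match @unpickle {ffun 'I_m -> rat * rat} k with
  | Some f => ((fun j => ratr (f j).1), (fun j => ratr (f j).2))
  | None => ((fun _ => 0), (fun _ => 0))
  end.

Lemma pibase (O : Pt -> Prop) : openP O -> (exists x, O x) ->
  exists k, validB (Qb k).1 (Qb k).2 /\ forall y, inB (Qb k).1 (Qb k).2 y -> O y.
Proof.
move=> HO [x Ox]; have [p [q [Hv [_ HO']]]] := box_in_open HO Ox.
have Hc : forall j : 'I_m, exists t : rat * rat, p j < (ratr t.1 : R) /\ (ratr t.1 : R) < ratr t.2 /\ (ratr t.2 : R) < q j.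
  move=> j; have [H1 [H2 H3]] := Hv j.
  have [a] := @rat_in_itvoo R (p j) ((p j + q j) / 2) ltac:(lra); rewrite in_itv /= => /andP [Ha1 Ha2].
  have [b] := @rat_in_itvoo R ((p j + q j) / 2) (q j) ltac:(lra); rewrite in_itv /= => /andP [Hb1 Hb2].
  exists (a, b) => /=; lra.
have [F HF] := choice Hc.
exists (pickle [ffun j => F j]); rewrite /Qb pickleK /=; split.
- move=> j; rewrite !ffunE; have [H1 [H2 H3]] := HF j; have := Hv j; lra.
- move=> y Hy; apply: HO' => j; have := Hy j; rewrite !ffunE; have [H1 [H2 H3]] := HF j.
  apply: inI_sub; lra.
Qed.

Definition avail (k : nat) (C : Pt -> Prop) : Pt -> Prop :=
  if pselect (validB (Qb k).1 (Qb k).2 /\ exists x, inB (Qb k).1 (Qb k).2 x /\ ~ C x)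
  then fun x => inB (Qb k).1 (Qb k).2 x /\ ~ C x
  else fun x => ~ C x.

Fixpoint Cs (k : nat) : Pt -> Prop :=
  match k with
  | 0%N => fun _ => False
  | k'.+1 => fun x => Cs k' x \/ boxI (Gd (avail k' (Cs k'))) x
  end.

Definition Us (k : nat) := Gd (avail k (Cs k)).

Lemma Cs_inv k : openP (fun x => ~ Cs k x) /\ (exists x, ~ Cs k x) /\
  goodI (avail k (Cs k)) (Us k).
Proof.
have Hav : forall k, openP (fun x => ~ Cs k x) -> (exists x, ~ Cs k x) ->
    openP (avail k (Cs k)) /\ exists x, avail k (Cs k) x.
  move=> k' H1 H2; rewrite /avail; destruct (pselect _) as [[Hv [x Hx]]|Hn]; split => //.
  - exact: openP_and (@openP_inB R m _ _) H1.
  - by exists x.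
elim: k => [|k [IH1 [IH2 IH3]]].
- have H1 : openP (fun x => ~ Cs 0 x) by exact: openP_not0.
  have H2 : exists x, ~ Cs 0 x by exists (fun _ => pt0 R).
  have [H3 H4] := Hav 0%N H1 H2.
  by split=> //; split=> //; apply: GdP.
- have [HA1 HA2] := Hav k IH1 IH2.
  have [G1 [G2 [[x [Ax Hx]] G4]]] := IH3.
  have HavC : forall y, avail k (Cs k) y -> ~ Cs k y.
    by move=> y; rewrite /avail; destruct (pselect _) => //; case.
  have H1 : openP (fun x => ~ Cs k.+1 x).
    apply: (@openP_ext_helper (fun x => ~ Cs k x /\ ~ boxI (Us k) x)).
    + by move=> y /=; rewrite /Us; split; [move=> [A1 A2] [] | move=> H; split=> K; apply: H; [left|right]].
    + exact: openP_and IH1 (openP_notbox G1).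
  have H2 : exists x, ~ Cs k.+1 x.
    by exists x => /= -[K|K]; [exact: (HavC x Ax) K | exact: Hx K].
  have [H3 H4] := Hav k.+1 H1 H2.
  by split=> //; split=> //; apply: GdP.
Qed.

Lemma Cs_box n d x : boxI (Us n) x -> Cs (n + d).+1 x.
Proof.
move=> Hb; elim: d => [|d IH]; first by rewrite addn0; right.
by rewrite addnS; left.
Qed.

Lemma Cs_ex k x : Cs k x -> exists n, boxI (Us n) x.
Proof.
elim: k => [|k IH] //= [H|H]; [exact: IH | by exists k].
Qed.

Lemma Cs_lt n n' x : (n < n')%N -> boxI (Us n) x -> Cs n' x.
Proof. move=> Hlt Hb; rewrite -(subnKC Hlt) addSn; exact: Cs_box. Qed.

Lemma Us_avail k x : boxI (Us k) x -> ~ Cs k x.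
Proof.
move=> Hb; have [_ [_ [_ [G2 _]]]] := Cs_inv k; have := G2 x Hb.
by rewrite /avail; destruct (pselect _) => //; case.
Qed.

Theorem main_thm : exists (I : nat -> 'I_m -> A -> Prop),
    (forall n j, clopen_intervalA (I n j)) /\
    (forall n n' x, n <> n' -> (forall j, I n j (x j)) -> ~ (forall j, I n' j (x j))) /\
    (forall O : Pt -> Prop, openP O -> (exists x, O x) ->
       exists n x, O x /\ forall j, I n j (x j)) /\
    (forall n, exists (hs : 'I_m -> A -> A) (tau : 'I_m -> 'I_m),
       bijective tau /\
       (forall j, strictly_monotone_onA (I n j) (hs j) /\
          exists J, clopen_intervalA J /\ homeo_ontoA (I n j) J (hs j)) /\
       (forall x, (forall j, I n j (x j)) ->
          forall j, h x (tau j) = hs j (x j))).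
Proof.
exists Us; split; [|split; [|split]].
- by move=> n j; have [_ [_ [G1 _]]] := Cs_inv n; exact: G1 j.
- move=> n n' x Hnn' Hn Hn'.
  case: (ltngtP n n') => [Hlt|Hlt|Heq]; last by case: Hnn'; apply/eqP; rewrite Heq.
  + exact: (Us_avail Hn') (Cs_lt Hlt Hn).
  + exact: (Us_avail Hn) (Cs_lt Hlt Hn').
- move=> O HO HOx; have [k [HvQ HQ]] := pibase HO HOx.
  case: (pselect (validB (Qb k).1 (Qb k).2 /\ exists x, inB (Qb k).1 (Qb k).2 x /\ ~ Cs k x)) => Hc.
  + have [_ [_ [G1 [G2 _]]]] := Cs_inv k.
    have [x Hx] := boxI_nonempty G1.
    exists k, x; split=> //; apply: HQ; move: (G2 x Hx); rewrite /avail.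
    destruct (pselect _) as [H0|Hn]; [by case | by case: Hn].
  + have HmQ := midB_in HvQ.
    have HC : Cs k (midB (Qb k).1 (Qb k).2).
      by apply: contrapT => Hn; apply: Hc; split=> //; exists (midB (Qb k).1 (Qb k).2).
    have [n Hn] := Cs_ex HC; exists n, (midB (Qb k).1 (Qb k).2); split=> //; exact: HQ.
- move=> n; have [_ [_ [_ [_ [_ G]]]]] := Cs_inv n; exact: G.
Qed.

End Final.

Theorem theorem1p3 (R : realType) (m : nat) (hm : (0 < m)%N)
    (h : ('I_m -> dA R) -> ('I_m -> dA R)) (hh : homeomorphismP h) :
  exists (I : nat -> 'I_m -> dA R -> Prop),
    (forall n j, clopen_intervalA (I n j)) /\
    (* pairwise disjoint boxes U_n = prod_j I n j *)
    (forall n n' x, n <> n' -> (forall j, I n j (x j)) -> ~ (forall j, I n' j (x j))) /\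
    (* the union is dense *)
    (forall O : ('I_m -> dA R) -> Prop, openP O -> (exists x, O x) ->
       exists n x, O x /\ forall j, I n j (x j)) /\
    (forall n, exists (hs : 'I_m -> dA R -> dA R) (tau : 'I_m -> 'I_m),
       bijective tau /\
       (forall j, strictly_monotone_onA (I n j) (hs j) /\
          exists J, clopen_intervalA J /\ homeo_ontoA (I n j) J (hs j)) /\
       (forall x, (forall j, I n j (x j)) ->
          forall j, h x (tau j) = hs j (x j))).
Proof.
case: hh => g [gh [hg [ch cg]]].
exact: (main_thm gh hg ch cg hm).
Qed.
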